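(* For $n \ge 2$, \begin{align*} \mathbf{M}_n &= \begin{pmatrix} \frac{\Gamma \left(\frac{mn + m + n}{m + 1}\right)}{\Gamma(n) \, \Gamma \left(\frac{2m + 1}{m + 1}\right)} & 0 \\ \frac{2 \, \Gamma\left(\frac{mn + m + n}{m + 1}\right)}{\Gamma(n) \, \Gamma \left(\frac{2m + 1}{m + 1}\right)} - \frac{2(mn + n - 1) \, \Gamma \left(\frac{mn + m + n - 1}{m + 1}\right)}{m \, \Gamma(n) \, \Gamma \left(\frac{2m}{m + 1}\right)} & \frac{(mn + n - 1) \, \Gamma \left(\frac{mn + m + n - 1}{m + 1}\right)}{m \, \Gamma(n) \, \Gamma \left(\frac{2m}{m + 1}\right)} \end{pmatrix} \begin{pmatrix} W_n \\ B_n \end{pmatrix} \\ &\qquad + \begin{pmatrix} - \frac{\Gamma \left(\frac{mn + 2m + n + 1}{m + 1}\right)}{\Gamma(n) \, \Gamma \left(\frac{3m + 2}{m + 1}\right)} + 1 \\ \frac{(m + 1)(2mn + m + 2n - 1) \, \Gamma \left(\frac{mn + 2m + n}{m + 1}\right)}{m(3m + 1) \, \Gamma(n) \, \Gamma \left(\frac{2m}{m + 1}\right)} - \frac{2 \, \Gamma \left(\frac{mn + 2m + n + 1}{m + 1}\right)}{\Gamma(n) \, \Gamma \left(\frac{3m + 2}{m + 1}\right)} \end{pmatrix} \end{align*} is a martingale array (with respect to the filtration $\mathbb{F}_{n,0}$).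
   Context: A preferential dynamic attachment circuit of index $m\ge 2$ starts at time $0$ with a single node $0$. At time $n\ge1$ a new node $n$ is added and chooses $m$ parents one at a time, with replacement, from the existing nodes; at each of these $m$ steps an existing node $v$ is chosen with probability proportional to its current outdegree plus one (outdegrees are updated after each of the $m$ choices), and an edge is drawn from the chosen parent to node $n$. In the extended circuit, a node of outdegree $s$ carries $s+1$ external nodes; external nodes of nodes of outdegree $0$ are colored white and those of nodes of outdegree $1$ are colored blue. $W_n$ is the number of white external nodes (= number of nodes of outdegree $0$) and $B_n$ is the number of blue external nodes (= twice the number of nodes of outdegree $1$) after $n$ insertions. $\mathbb{F}_{n-1,0}$ is the $\sigma$-field generated by the growth of the circuit through the first $n-1$ node insertions. One has $\mathbb{E}[(W_n,B_n)^\top \mid \mathbb{F}_{n-1,0}] = \mathbf{A}_n (W_{n-1},B_{n-1})^\top + (1,0)^\top$ with $\mathbf{A}_n=\begin{pmatrix}\frac{(m+1)(n-1)}{mn+n-1} & 0\\ \frac{2m(m+1)(n-1)}{(mn+n-2)(mn+n-1)} & \frac{(m+1)(n-1)(mn-m+n-2)}{(mn+n-2)(mn+n-1)}\end{pmatrix}$. *)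

(* Defs.v *)
From Stdlib Require Import Reals List Arith Lia.
From Coquelicot Require Import Coquelicot.
Import ListNotations.
Open Scope R_scope.

(** Euler's Gamma function, Gamma x = \int_0^\infty t^(x-1) e^(-t) dt
    (improper Riemann integral; used only for x > 0). *)
Definition Gamma (x : R) : R :=
  RInt_gen (fun t => Rpower t (x - 1) * exp (- t))
           (at_right 0) (Rbar_locally p_infty).

(** A growth history is the list of the parent-choice steps of the node
    insertions 1, 2, ..., k (in this order); step number n (node n) is the
    list of the m parents [p_1; ...; p_m] chosen one at a time.  *)
Definition step := list nat.
Definition history := list step.

Definition count_step (v : nat) (c : step) : nat :=
  count_occ Nat.eq_dec c v.

Definition outdeg (h : history) (v : nat) : nat :=
  fold_right (fun c acc => (count_step v c + acc)%nat) 0%nat h.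

Definition total_weight (deg : nat -> nat) (n : nat) : R :=
  fold_right Rplus 0 (map (fun v => INR (deg v + 1)) (seq 0 n)).

Fixpoint step_prob (deg : nat -> nat) (n : nat) (c : step) : R :=
  match c with
  | [] => 1
  | p :: c' =>
      if Nat.ltb p n then
        INR (deg p + 1) / total_weight deg n *
        step_prob (fun v => if Nat.eqb v p then S (deg v) else deg v) n c'
      else 0
  end.

Fixpoint hist_prob_rev (m : nat) (hr : history) : R :=
  match hr with
  | [] => 1
  | c :: hr' =>
      hist_prob_rev m hr' *
      (if Nat.eqb (length c) m
       then step_prob (outdeg hr') (S (length hr')) c else 0)
  end.

Definition hist_prob (m : nat) (h : history) : R := hist_prob_rev m (rev h).

Fixpoint all_steps (m n : nat) : list step :=
  match m with
  | O => [[]]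
  | S m' => flat_map (fun p => map (cons p) (all_steps m' n)) (seq 0 n)
  end.

(** conditional expectation, given the growth history h of the first
    length h insertions, of a functional f of the history after one more
    insertion (node length h + 1). *)
Definition cond_exp (m : nat) (h : history) (f : history -> R) : R :=
  fold_right Rplus 0
    (map (fun c => step_prob (outdeg h) (S (length h)) c * f (h ++ [c]))
         (all_steps m (S (length h)))).

Definition W_of (h : history) : R :=
  INR (length (filter (fun v => Nat.eqb (outdeg h v) 0) (seq 0 (S (length h))))).
Definition B_of (h : history) : R :=
  2 * INR (length (filter (fun v => Nat.eqb (outdeg h v) 1) (seq 0 (S (length h))))).

Definition M1 (m n : nat) (h : history) : R :=
  let m := INR m in let n' := INR n in
  Gamma ((m*n' + m + n') / (m + 1)) /
    (Gamma n' * Gamma ((2*m + 1) / (m + 1))) * W_of h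
  + (- Gamma ((m*n' + 2*m + n' + 1) / (m + 1)) /
       (Gamma n' * Gamma ((3*m + 2) / (m + 1))) + 1).

Definition M2 (m n : nat) (h : history) : R :=
  let m := INR m in let n' := INR n in
  (2 * Gamma ((m*n' + m + n') / (m + 1)) /
     (Gamma n' * Gamma ((2*m + 1) / (m + 1)))
   - 2 * (m*n' + n' - 1) * Gamma ((m*n' + m + n' - 1) / (m + 1)) /
     (m * Gamma n' * Gamma (2*m / (m + 1)))) * W_of h
  + (m*n' + n' - 1) * Gamma ((m*n' + m + n' - 1) / (m + 1)) /
     (m * Gamma n' * Gamma (2*m / (m + 1))) * B_of h
  + ((m + 1) * (2*m*n' + m + 2*n' - 1) * Gamma ((m*n' + 2*m + n') / (m + 1)) /
       (m * (3*m + 1) * Gamma n' * Gamma (2*m / (m + 1)))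
     - 2 * Gamma ((m*n' + 2*m + n' + 1) / (m + 1)) /
       (Gamma n' * Gamma ((3*m + 2) / (m + 1)))).

(* Main.v *)
Require Import Defs.
From Stdlib Require Import Reals List.
From Stdlib Require Import Arith Lia Lra FunctionalExtensionality.
From Coquelicot Require Import Coquelicot.
Import ListNotations.
Open Scope R_scope.

Definition fy (y t : R) : R := exp ((y - 1) * ln t) * exp (- t).

Lemma fy_cont y t : 0 < t -> continuous (fy y) t.
Proof.
  intros Ht. apply (@ex_derive_continuous R_AbsRing R_NormedModule). unfold fy. auto_derive. lra.
Qed.

Lemma fy_exRInt y a b : 0 < a -> 0 < b -> ex_RInt (fy y) a b.
Proof.
  intros Ha Hb. apply (@ex_RInt_continuous R_CompleteNormedModule). intros z Hz. apply fy_cont.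
  assert (0 < Rmin a b) by (apply Rmin_glb_lt; auto). lra.
Qed.

Lemma fy_pos y t : 0 < fy y t.
Proof. unfold fy. apply Rmult_lt_0_compat; apply exp_pos. Qed.

Lemma ball_R (x e z : R) : ball x e z <-> Rabs (z - x) < e.
Proof. unfold ball; simpl; unfold AbsRing_ball, abs, minus, plus, opp; simpl. tauto. Qed.

Lemma mono_right (f : R -> R) c M :
  (forall b, c <= b -> ex_RInt f c b) -> (forall t, c <= t -> 0 <= f t) ->
  (forall b, c <= b -> RInt f c b <= M) ->
  exists l, is_RInt_gen f (at_point c) (Rbar_locally p_infty) l /\ (forall b, c <= b -> RInt f c b <= l).
Proof.
  intros Hex Hpos Hb.
  set (E := fun z => exists b, c <= b /\ z = RInt f c b).
  destruct (completeness E) as [l [Hub Hlub]].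
  { exists M. intros z [b [Hbb ->]]. apply Hb; auto. }
  { exists (RInt f c c). exists c. split; [lra|reflexivity]. }
  exists l. split; [|intros b0 Hb0; apply Hub; exists b0; split; [lra|reflexivity]].
  intros P [eps Heps]. simpl in *.
  assert (Hex0 : exists b0, c <= b0 /\ l - eps < RInt f c b0).
  { apply Classical_Prop.NNPP. intros Hn.
    assert (l <= l - eps). { apply Hlub. intros z [b [Hbb ->]].
      apply Rnot_lt_le. intros Hlt. apply Hn. exists b. split; auto. }
    destruct eps; simpl in *; lra. }
  destruct Hex0 as [b0 [Hcb0 Hb0]].
  exists (fun x => x = c) (fun b => b0 < b).
  - reflexivity.
  - exists b0. auto.
  - intros x b -> Hb0b. exists (RInt f c b). split.
    + apply (@RInt_correct R_CompleteNormedModule). apply Hex. lra.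
    + apply Heps. apply ball_R.
      assert (RInt f c b <= l) by (apply Hub; exists b; split; [lra|reflexivity]).
      assert (RInt f c b0 <= RInt f c b).
      { rewrite <- (@RInt_Chasles R_CompleteNormedModule f c b0 b).
        - assert (0 <= RInt f b0 b). { apply RInt_ge_0. lra.
            apply (ex_RInt_Chasles_2 f c). lra. apply Hex; lra.
            intros t Ht; apply Hpos; lra. }
          simpl. unfold plus; simpl. lra.
        - apply Hex; lra.
        - apply (ex_RInt_Chasles_2 f c). lra. apply Hex; lra. }
      apply Rabs_lt_between'. lra.
Qed.

Lemma mono_left (f : R -> R) c M : 0 < c ->
  (forall a, 0 < a <= c -> ex_RInt f a c) -> (forall t, 0 < t <= c -> 0 <= f t) ->
  (forall a, 0 < a <= c -> RInt f a c <= M) ->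
  exists l, is_RInt_gen f (at_right 0) (at_point c) l /\ (forall a, 0 < a <= c -> RInt f a c <= l).
Proof.
  intros Hc Hex Hpos Hb.
  set (E := fun z => exists a, 0 < a <= c /\ z = RInt f a c).
  destruct (completeness E) as [l [Hub Hlub]].
  { exists M. intros z [b [Hbb ->]]. apply Hb; auto. }
  { exists (RInt f c c). exists c. split; [lra|reflexivity]. }
  exists l. split; [|intros b0 Hb0; apply Hub; exists b0; split; [lra|reflexivity]].
  intros P [eps Heps]. simpl in *.
  assert (Hex0 : exists a0, 0 < a0 <= c /\ l - eps < RInt f a0 c).
  { apply Classical_Prop.NNPP. intros Hn.
    assert (l <= l - eps). { apply Hlub. intros z [b [Hbb ->]].
      apply Rnot_lt_le. intros Hlt. apply Hn. exists b. split; auto. }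
    destruct eps; simpl in *; lra. }
  destruct Hex0 as [a0 [Ha0 Hb0]].
  assert (Ha0p : 0 < a0) by lra.
  exists (fun a => 0 < a < a0) (fun x => x = c).
  - exists (mkposreal a0 Ha0p). intros y Hy Hy0. apply ball_R in Hy. simpl in Hy.
    split; auto. assert (H1 : Rabs (y - 0) < a0) by exact Hy. rewrite Rminus_0_r, Rabs_right in H1; lra.
  - reflexivity.
  - intros a x Ha ->. exists (RInt f a c). split.
    + apply (@RInt_correct R_CompleteNormedModule). apply Hex. lra.
    + apply Heps. apply ball_R.
      assert (RInt f a c <= l) by (apply Hub; exists a; split; [lra|reflexivity]).
      assert (RInt f a0 c <= RInt f a c).
      { rewrite <- (@RInt_Chasles R_CompleteNormedModule f a a0 c).
        - assert (0 <= RInt f a a0). { apply RInt_ge_0. lra.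
            apply (ex_RInt_Chasles_1 f a a0 c). lra. apply Hex; lra.
            intros t Ht; apply Hpos; lra. }
          simpl. unfold plus; simpl. lra.
        - apply (ex_RInt_Chasles_1 f a a0 c). lra. apply Hex; lra.
        - apply Hex; lra. }
      apply Rabs_lt_between'. lra.
Qed.

Lemma exp_pow_m1 y t : 0 < t -> exp ((y - 1) * ln t) = exp (y * ln t) / t.
Proof.
  intros Ht. replace ((y-1) * ln t) with (y * ln t + - ln t) by ring.
  rewrite exp_plus, exp_Ropp, exp_ln; auto.
Qed.

Lemma left_bound y a : 0 < y -> 0 < a <= 1 -> RInt (fy y) a 1 <= / y.
Proof.
  intros Hy Ha.
  set (py := fun t => exp ((y - 1) * ln t)).
  assert (HI : is_RInt py a 1 (minus (exp (y * ln 1) / y) (exp (y * ln a) / y))).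
  { apply (@is_RInt_derive R_CompleteNormedModule (fun t => exp (y * ln t) / y)).
    - intros x Hx. assert (0 < x). { assert (0 < Rmin a 1) by (apply Rmin_glb_lt; lra). lra. }
      auto_derive. lra. unfold py. rewrite exp_pow_m1 by lra. field. split; lra.
    - intros x Hx. assert (0 < x). { assert (0 < Rmin a 1) by (apply Rmin_glb_lt; lra). lra. }
      apply (@ex_derive_continuous R_AbsRing R_NormedModule). unfold py. auto_derive. lra. }
  apply Rle_trans with (RInt py a 1).
  - apply RInt_le. lra. apply fy_exRInt; lra. eexists; exact HI.
    intros x Hx. unfold fy, py. rewrite <- (Rmult_1_r (exp ((y-1) * ln x))) at 2.
    apply Rmult_le_compat_l. left; apply exp_pos.
    left; rewrite <- exp_0. apply exp_increasing; lra.
  - rewrite (is_RInt_unique _ _ _ _ HI). unfold minus, plus, opp; simpl.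
    rewrite ln_1, Rmult_0_r, exp_0.
    assert (0 < exp (y * ln a) / y) by (apply Rdiv_lt_0_compat; [apply exp_pos|lra]).
    unfold Rdiv in *. lra.
Qed.

Lemma ln_le_sub1 z : 0 < z -> ln z <= z - 1.
Proof. intros Hz. pose proof (exp_ineq1_le (ln z)) as H. rewrite exp_ln in H; lra. Qed.

Lemma exp_le x y : x <= y -> exp x <= exp y.
Proof. intros [H|H]. left; apply exp_increasing; auto. subst; lra. Qed.

Lemma ln_le x y : 0 < x -> x <= y -> ln x <= ln y.
Proof. intros Hx [H|H]. left; apply ln_increasing; auto. subst; lra. Qed.

Lemma fy_tail_bound y t : 0 < y -> 1 <= t ->
  fy y t <= exp (y * ln (2 * y)) * exp (- (t / 2)).
Proof.
  intros Hy Ht. unfold fy. rewrite <- !exp_plus. apply exp_le.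
  assert (H0 : 0 <= ln t) by (rewrite <- ln_1; apply ln_le; lra).
  assert (H1 : ln (t / (2 * y)) <= t / (2 * y) - 1)
    by (apply ln_le_sub1; apply Rdiv_lt_0_compat; lra).
  unfold Rdiv in H1. rewrite ln_mult, ln_Rinv in H1 by (try apply Rinv_0_lt_compat; lra).
  assert (y * ln t <= y * ln (2 * y) + t / 2 - y).
  { replace (t/2) with (y * (t * / (2 * y))) by (field; lra).
    nra. }
  nra.
Qed.

Lemma right_bound y b : 0 < y -> 1 <= b ->
  RInt (fy y) 1 b <= 2 * exp (y * ln (2 * y)).
Proof.
  intros Hy Hb. set (C := exp (y * ln (2 * y))).
  assert (HC : 0 < C) by apply exp_pos.
  set (g := fun t => C * exp (- (t / 2))).
  assert (HI : is_RInt g 1 b (minus (- 2 * C * exp (- (b / 2))) (- 2 * C * exp (- (1 / 2))))).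
  { apply (@is_RInt_derive R_CompleteNormedModule (fun t => - 2 * C * exp (- (t / 2)))).
    - intros x Hx. auto_derive. auto. unfold g; cbv beta; change (@eq R (-2 * C * (- (1 * / 2) * exp (- (x * / 2)))) (C * exp (- (x / 2)))); unfold Rdiv; field.
    - intros z Hz. apply (@ex_derive_continuous R_AbsRing R_NormedModule). unfold g. auto_derive. auto. }
  apply Rle_trans with (RInt g 1 b).
  - apply RInt_le. lra. apply fy_exRInt; lra. eexists; exact HI.
    intros x Hx. apply fy_tail_bound; lra.
  - rewrite (is_RInt_unique _ _ _ _ HI). unfold minus, plus, opp; simpl.
    pose proof (exp_pos (- (b/2))). 
    assert (exp (- (1/2)) <= 1) by (rewrite <- exp_0 at 2; apply exp_le; lra).
    pose proof (Rmult_le_compat_l C _ _ (Rlt_le _ _ HC) H0).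
    pose proof (Rmult_lt_0_compat C _ HC H). lra.
Qed.

Lemma Gamma_fy y : Gamma y = RInt_gen (fy y) (at_right 0) (Rbar_locally p_infty).
Proof. reflexivity. Qed.

Lemma Gamma_ex y : 0 < y -> exists l,
  is_RInt_gen (fy y) (at_right 0) (Rbar_locally p_infty) l /\ 0 < l.
Proof.
  intros Hy.
  destruct (mono_left (fy y) 1 (/ y)) as [l1 [H1 H1b]].
  - lra.
  - intros a Ha. apply fy_exRInt; lra.
  - intros t Ht. left; apply fy_pos.
  - intros a Ha. apply left_bound; auto.
  - destruct (mono_right (fy y) 1 (2 * exp (y * ln (2 * y)))) as [l2 [H2 H2b]].
    + intros b Hb. apply fy_exRInt; lra.
    + intros t Ht. left; apply fy_pos.
    + intros b Hb. apply right_bound; auto.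
    + exists (plus l1 l2). split. eapply is_RInt_gen_Chasles; eauto.
      assert (0 < RInt (fy y) (1/2) 1).
      { apply RInt_gt_0. lra. intros; apply fy_pos. intros x Hx; apply fy_cont; lra. }
      specialize (H1b (1/2) ltac:(lra)). specialize (H2b 1 ltac:(lra)).
      rewrite RInt_point in H2b. unfold zero in H2b; simpl in H2b. unfold plus; simpl. lra.
Qed.

Lemma Gamma_pos y : 0 < y -> 0 < Gamma y.
Proof.
  intros Hy. destruct (Gamma_ex y Hy) as [l [Hl Hl0]]. rewrite Gamma_fy.
  rewrite (is_RInt_gen_unique _ _ Hl). auto.
Qed.


Lemma fy_succ y t : fy (y + 1) t = exp (y * ln t) * exp (- t).
Proof. unfold fy. f_equal. f_equal. ring. Qed.

Lemma IBP y a b : 0 < a -> 0 < b ->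
  is_RInt (fy (y + 1)) a b (fy (y+1) a - fy (y+1) b + y * RInt (fy y) a b).
Proof.
  intros Ha Hb.
  assert (Hm : 0 < Rmin a b) by (apply Rmin_glb_lt; lra).
  set (d := fun t => exp (y * ln t) * exp (- t) - y * fy y t).
  assert (H1 : is_RInt d a b (minus (- fy (y+1) b) (- fy (y+1) a))).
  { apply (@is_RInt_derive R_CompleteNormedModule (fun t => - fy (y+1) t)).
    - intros x Hx. assert (0 < x) by lra. unfold fy. auto_derive. lra.
      match goal with |- ?A = ?B => change (@eq R A B) end.
      unfold d, fy. replace (y + 1 - 1) with y by ring. rewrite exp_pow_m1 by lra. field. lra.
    - intros x Hx. assert (0 < x) by lra.
      apply (@ex_derive_continuous R_AbsRing R_NormedModule). unfold d, fy. auto_derive. lra. }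
  assert (H2 : is_RInt (fun t => y * fy y t) a b (y * RInt (fy y) a b)).
  { exact (is_RInt_scal (V:=R_NormedModule) (fy y) a b y _
      ((@RInt_correct R_CompleteNormedModule) _ _ _ (fy_exRInt y a b Ha Hb))). }
  pose proof (is_RInt_plus (V:=R_NormedModule) _ _ _ _ _ _ H1 H2) as H3.
  replace (fy (y+1) a - fy (y+1) b + y * RInt (fy y) a b) with
    (plus (minus (- fy (y + 1) b) (- fy (y + 1) a)) (y * RInt (fy y) a b))
    by (unfold plus, minus, opp; simpl; match goal with |- ?A = ?B => change (@eq R A B) end; unfold plus; simpl; ring).
  eapply is_RInt_ext; [|exact H3].
  intros x Hx. unfold d, plus; simpl. rewrite fy_succ.
  match goal with |- ?A = ?B => change (@eq R A B) end; ring.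
Qed.

Lemma lim0 y eps : 0 < y -> 0 < eps ->
  at_right 0 (fun a => 0 < a /\ fy (y+1) a < eps).
Proof.
  intros Hy He. set (d := exp (ln eps / y)).
  assert (Hd : 0 < d) by apply exp_pos.
  exists (mkposreal d Hd). intros x Hx Hx0.
  assert (H1 : Rabs (x - 0) < d) by exact Hx.
  rewrite Rminus_0_r, Rabs_right in H1 by lra. simpl in H1.
  split; auto. rewrite fy_succ.
  assert (H2 : ln x < ln eps / y) by (rewrite <- (ln_exp (ln eps / y)); apply ln_increasing; auto).
  assert (H3 : y * ln x < ln eps).
  { apply Rmult_lt_compat_l with (r := y) in H2; auto.
    replace (y * (ln eps / y)) with (ln eps) in H2 by (field; lra). auto. }
  apply exp_increasing in H3. rewrite exp_ln in H3 by auto.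
  assert (exp (- x) < 1) by (rewrite <- exp_0; apply exp_increasing; lra).
  pose proof (exp_pos (y * ln x)). pose proof (exp_pos (- x)). nra.
Qed.

Lemma limInf y eps : 0 < y -> 0 < eps ->
  Rbar_locally p_infty (fun b => 0 < b /\ fy (y+1) b < eps).
Proof.
  intros Hy He. set (C := exp ((y+1) * ln (2 * (y+1)))).
  assert (HC : 0 < C) by apply exp_pos.
  exists (Rmax 1 (-2 * ln (eps / C))). intros b Hb.
  assert (Hb1 : 1 < b) by (eapply Rle_lt_trans; [apply Rmax_l|exact Hb]).
  assert (Hb2 : -2 * ln (eps / C) < b) by (eapply Rle_lt_trans; [apply Rmax_r|exact Hb]).
  split; [lra|].
  eapply Rle_lt_trans. apply fy_tail_bound; lra. fold C.
  assert (H1 : - (b / 2) < ln (eps / C)) by lra.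
  apply exp_increasing in H1. rewrite exp_ln in H1 by (apply Rdiv_lt_0_compat; auto).
  apply Rmult_lt_compat_l with (r := C) in H1; auto.
  replace (C * (eps / C)) with eps in H1 by (field; lra). auto.
Qed.



Lemma Gamma_rec y : 0 < y -> Gamma (y + 1) = y * Gamma y.
Proof.
  intros Hy. destruct (Gamma_ex y Hy) as [l [Hl _]].
  rewrite !Gamma_fy. rewrite (is_RInt_gen_unique _ _ Hl).
  apply is_RInt_gen_unique.
  intros P [eps Heps]. unfold filtermapi.
  set (e3 := eps / 3).
  assert (He3 : 0 < e3) by (unfold e3; destruct eps; simpl; lra).
  assert (Hdl : 0 < e3 / (y + 1)) by (apply Rdiv_lt_0_compat; lra).
  pose proof (Hl (ball l (mkposreal _ Hdl)) (locally_ball l (mkposreal _ Hdl))) as HL.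
  unfold filtermapi in HL.
  assert (H0 : filter_prod (at_right 0) (Rbar_locally p_infty)
     (fun ab => (0 < fst ab /\ fy (y+1) (fst ab) < e3) /\ (0 < snd ab /\ fy (y+1) (snd ab) < e3))).
  { exists (fun a => 0 < a /\ fy (y+1) a < e3) (fun b => 0 < b /\ fy (y+1) b < e3).
    apply lim0; auto. apply limInf; auto. intros x z Hx Hz; simpl; auto. }
  eapply filter_imp; [|apply filter_and; [exact H0|exact HL]].
  intros [a b] [[[Ha Hfa] [Hb Hfb]] [z [Hz Hbz]]]. simpl in *.
  exists (fy (y+1) a - fy (y+1) b + y * RInt (fy y) a b). split.
  - apply IBP; auto.
  - apply Heps. apply ball_R.
    assert (Hzz : z = RInt (fy y) a b).
    { symmetry. apply is_RInt_unique. exact Hz. }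
    subst z. apply ball_R in Hbz. simpl in Hbz.
    pose proof (fy_pos (y+1) a). pose proof (fy_pos (y+1) b).
    assert (H5 : Rabs (y * RInt (fy y) a b - y * l) < e3).
    { rewrite <- Rmult_minus_distr_l, Rabs_mult, Rabs_right by lra.
      apply Rle_lt_trans with ((y+1) * Rabs (RInt (fy y) a b - l)).
      pose proof (Rabs_pos (RInt (fy y) a b - l)). nra.
      apply Rmult_lt_compat_l with (r := y+1) in Hbz; [|lra].
      replace ((y + 1) * (e3 / (y + 1))) with e3 in Hbz by (field; lra). auto. }
    apply Rabs_lt_between' in H5. apply Rabs_lt_between'.
    unfold e3 in *. lra.
Qed.


Definition sumR (l : list nat) (f : nat -> R) : R := fold_right Rplus 0 (map f l).

Lemma sumR_app l1 l2 f : sumR (l1 ++ l2) f = sumR l1 f + sumR l2 f.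
Proof. unfold sumR. rewrite map_app, fold_right_app. induction l1; simpl; [ring|]. rewrite IHl1. ring. Qed.

Lemma sumR_ext l f g : (forall x, In x l -> f x = g x) -> sumR l f = sumR l g.
Proof. intros H. unfold sumR. f_equal. apply map_ext_in. auto. Qed.

Lemma sumR_plus l f g : sumR l (fun x => f x + g x) = sumR l f + sumR l g.
Proof. unfold sumR. induction l; simpl; [ring|]. rewrite IHl. ring. Qed.

Lemma sumR_minus l f g : sumR l (fun x => f x - g x) = sumR l f - sumR l g.
Proof. unfold sumR. induction l; simpl; [ring|]. rewrite IHl. ring. Qed.

Lemma sumR_scal l a f : sumR l (fun x => a * f x) = a * sumR l f.
Proof. unfold sumR. induction l; simpl; [ring|]. rewrite IHl. ring. Qed.

Lemma sumR_zero l : sumR l (fun _ => 0) = 0.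
Proof. unfold sumR. induction l; simpl; [ring|]. rewrite IHl. ring. Qed.

Lemma sumR_seqS n f : sumR (seq 0 (S n)) f = sumR (seq 0 n) f + f n.
Proof. rewrite seq_S, sumR_app. unfold sumR at 2. simpl. ring. Qed.

Lemma sumR_delta n p a : (p < n)%nat ->
  sumR (seq 0 n) (fun v => if Nat.eqb v p then a else 0) = a.
Proof.
  induction n; intros Hp; [lia|]. rewrite sumR_seqS.
  destruct (Nat.eq_dec p n) as [->|Hne].
  - rewrite Nat.eqb_refl. rewrite (sumR_ext _ _ (fun _ => 0)). rewrite sumR_zero. ring.
    intros x Hx. apply in_seq in Hx. destruct (Nat.eqb_spec x n); [lia|auto].
  - rewrite IHn by lia. destruct (Nat.eqb_spec n p); [lia|ring].
Qed.

Lemma sumR_pos n f : (0 < n)%nat -> (forall v, 0 < f v) -> 0 < sumR (seq 0 n) f.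
Proof.
  intros Hn Hf. induction n; [lia|]. rewrite sumR_seqS.
  destruct n. unfold sumR; simpl. specialize (Hf 0%nat). lra.
  specialize (IHn ltac:(lia)). specialize (Hf (S n)). lra.
Qed.

Lemma length_filter_sumR (f : nat -> bool) l :
  INR (length (filter f l)) = sumR l (fun v => if f v then 1 else 0).
Proof.
  induction l; [reflexivity|]. unfold sumR in *. cbn [filter map fold_right].
  destruct (f a); cbn [length]; rewrite <- IHl; [rewrite S_INR|]; ring.
Qed.

Definition inc (p : nat) (d : nat -> nat) : nat -> nat :=
  fun v => if Nat.eqb v p then S (d v) else d v.
Definition upd (c : step) (d : nat -> nat) : nat -> nat :=
  fun v => (d v + count_step v c)%nat.
Definition ind0 (k : nat) : R := if Nat.eqb k 0 then 1 else 0.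
Definition ind1 (k : nat) : R := if Nat.eqb k 1 then 1 else 0.
Definition Zc n d := sumR (seq 0 n) (fun v => ind0 (d v)).
Definition Oc n d := sumR (seq 0 n) (fun v => ind1 (d v)).
Definition TW n d := sumR (seq 0 n) (fun v => INR (d v + 1)).

Definition Ek (k n : nat) (d : nat -> nat) (F : (nat -> nat) -> R) : R :=
  fold_right Rplus 0 (map (fun c => step_prob d n c * F (upd c d)) (all_steps k n)).

Lemma TW_eq n d : total_weight d n = TW n d.
Proof. reflexivity. Qed.

Lemma upd_cons p c d : upd (p :: c) d = upd c (inc p d).
Proof.
  apply functional_extensionality. intros v. unfold upd, inc, count_step. simpl.
  destruct (Nat.eq_dec p v); destruct (Nat.eqb_spec v p); lia.
Qed.

Lemma fold_flat_map {A} (g : A -> R) (h : nat -> list A) l :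
  fold_right Rplus 0 (map g (flat_map h l)) = sumR l (fun p => fold_right Rplus 0 (map g (h p))).
Proof.
  induction l; simpl; [reflexivity|]. rewrite map_app, fold_right_app.
  unfold sumR in *; simpl. rewrite <- IHl.
  generalize (fold_right Rplus 0 (map g (flat_map h l))). intros r.
  induction (map g (h a)); simpl; [ring|]. rewrite IHl0. ring.
Qed.

Lemma fold_scal {A} (L : list A) a (g : A -> R) :
  fold_right Rplus 0 (map (fun c => a * g c) L) = a * fold_right Rplus 0 (map g L).
Proof. induction L; simpl; [ring|]. rewrite IHL. ring. Qed.

Lemma Ek_S k n d F :
  Ek (S k) n d F = sumR (seq 0 n) (fun p => INR (d p + 1) / TW n d * Ek k n (inc p d) F).
Proof.
  unfold Ek. simpl. rewrite fold_flat_map. apply sumR_ext. intros p Hp.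
  apply in_seq in Hp. rewrite map_map. rewrite <- fold_scal. f_equal. apply map_ext.
  intros c. simpl. assert (Nat.ltb p n = true) by (apply Nat.ltb_lt; lia). rewrite H.
  rewrite upd_cons. unfold inc, TW, Rdiv. rewrite TW_eq. unfold TW. ring.
Qed.

Lemma delta_plus n p a f : (p < n)%nat ->
  sumR (seq 0 n) f + a = sumR (seq 0 n) (fun v => f v + if Nat.eqb v p then a else 0).
Proof. intros Hp. rewrite sumR_plus, sumR_delta; auto. Qed.

Lemma delta_minus n p a f : (p < n)%nat ->
  sumR (seq 0 n) f - a = sumR (seq 0 n) (fun v => f v - if Nat.eqb v p then a else 0).
Proof. intros Hp. rewrite sumR_minus, sumR_delta; auto. Qed.

Lemma TW_inc n d p : (p < n)%nat -> TW n (inc p d) = TW n d + 1.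
Proof.
  intros Hp. unfold TW. rewrite (delta_plus n p 1 _ Hp).
  apply sumR_ext. intros v _. unfold inc. destruct (Nat.eqb v p).
  - rewrite !plus_INR, S_INR. ring.
  - ring.
Qed.

Lemma Zc_inc n d p : (p < n)%nat -> Zc n (inc p d) = Zc n d - ind0 (d p).
Proof.
  intros Hp. unfold Zc. rewrite (delta_minus n p _ _ Hp).
  apply sumR_ext. intros v _. unfold inc. destruct (Nat.eqb_spec v p).
  - subst. unfold ind0. simpl. destruct (d p =? 0); ring.
  - ring.
Qed.

Lemma Oc_inc n d p : (p < n)%nat -> Oc n (inc p d) = Oc n d + (ind0 (d p) - ind1 (d p)).
Proof.
  intros Hp. unfold Oc. rewrite (delta_plus n p _ _ Hp).
  apply sumR_ext. intros v _. unfold inc. destruct (Nat.eqb_spec v p).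
  - subst. unfold ind0, ind1. destruct (d p) as [|[|k]]; simpl; ring.
  - ring.
Qed.

Lemma TW_pos n d : (0 < n)%nat -> 0 < TW n d.
Proof. intros Hn. apply sumR_pos; auto. intros v. apply lt_0_INR. lia. Qed.

Lemma wsum1 n d : (0 < n)%nat -> sumR (seq 0 n) (fun p => INR (d p + 1) / TW n d) = 1.
Proof.
  intros Hn. pose proof (TW_pos n d Hn).
  rewrite (sumR_ext _ _ (fun p => / TW n d * INR (d p + 1))) by (intros; unfold Rdiv; ring).
  rewrite sumR_scal. fold (TW n d). field. lra.
Qed.

Lemma wsum0 n d : sumR (seq 0 n) (fun p => INR (d p + 1) / TW n d * ind0 (d p)) = Zc n d / TW n d.
Proof.
  unfold Zc. rewrite (sumR_ext _ _ (fun p => / TW n d * ind0 (d p))).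
  rewrite sumR_scal. unfold Rdiv. ring.
  intros p _. unfold ind0. destruct (Nat.eqb_spec (d p) 0) as [->|]; simpl; unfold Rdiv; ring.
Qed.

Lemma wsum1' n d : sumR (seq 0 n) (fun p => INR (d p + 1) / TW n d * ind1 (d p)) = 2 * Oc n d / TW n d.
Proof.
  unfold Oc. rewrite (sumR_ext _ _ (fun p => (2 / TW n d) * ind1 (d p))).
  rewrite sumR_scal. unfold Rdiv. ring.
  intros p _. unfold ind1. destruct (Nat.eqb_spec (d p) 1) as [->|]; simpl; unfold Rdiv; ring.
Qed.

Lemma step_lin n d a b : (0 < n)%nat ->
  sumR (seq 0 n) (fun p => INR (d p + 1) / TW n d * (a * Zc n (inc p d) + b * Oc n (inc p d)))
  = a * (Zc n d - Zc n d / TW n d) + b * (Oc n d + Zc n d / TW n d - 2 * Oc n d / TW n d).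
Proof.
  intros Hn.
  rewrite (sumR_ext _ _ (fun p => (a * Zc n d + b * Oc n d) * (INR (d p + 1) / TW n d)
     + ((b - a) * (INR (d p + 1) / TW n d * ind0 (d p)) - b * (INR (d p + 1) / TW n d * ind1 (d p))))).
  - rewrite sumR_plus, sumR_minus, !sumR_scal, wsum1, wsum0, wsum1' by auto.
    unfold Rdiv. ring.
  - intros p Hp. apply in_seq in Hp. rewrite Zc_inc, Oc_inc by lia. ring.
Qed.

Lemma Ek_one k n d : (0 < n)%nat -> Ek k n d (fun _ => 1) = 1.
Proof.
  intros Hn. revert d. induction k; intros d.
  - unfold Ek. simpl. ring.
  - rewrite Ek_S. rewrite (sumR_ext _ _ (fun p => INR (d p + 1) / TW n d)).
    apply wsum1; auto. intros p _. rewrite IHk. ring.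
Qed.

Lemma Ek_lin k n d a b c F G :
  Ek k n d (fun d' => a * F d' + b * G d' + c) = a * Ek k n d F + b * Ek k n d G + c * Ek k n d (fun _ => 1).
Proof.
  unfold Ek. induction (all_steps k n); simpl; [ring|]. rewrite IHl. ring.
Qed.

Lemma upd_nil d : upd [] d = d.
Proof. apply functional_extensionality. intros v. unfold upd, count_step. simpl. lia. Qed.

Lemma Ek_0 n d F : Ek 0 n d F = F d.
Proof. unfold Ek. simpl. rewrite upd_nil. ring. Qed.

Lemma Ek_Z k n d : (0 < n)%nat -> 3 <= TW n d ->
  Ek k n d (Zc n) = Zc n d * (TW n d - 1) / (TW n d + INR k - 1).
Proof.
  intros Hn. revert d. induction k; intros d HT.
  - rewrite Ek_0. simpl. field. lra.
  - rewrite Ek_S.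
    rewrite (sumR_ext _ _ (fun p => INR (d p + 1) / TW n d *
       ((TW n d / (TW n d + INR k)) * Zc n (inc p d) + 0 * Oc n (inc p d)))).
    + rewrite step_lin by auto. rewrite S_INR.
      pose proof (pos_INR k). field. lra.
    + intros p Hp. apply in_seq in Hp. rewrite IHk; rewrite TW_inc by lia; [|lra].
      pose proof (pos_INR k). field. lra.
Qed.

Lemma Ek_O k n d : (0 < n)%nat -> 3 <= TW n d ->
  Ek k n d (Oc n) = (INR k * (TW n d - 1) * Zc n d + (TW n d - 1) * (TW n d - 2) * Oc n d)
                    / ((TW n d + INR k - 2) * (TW n d + INR k - 1)).
Proof.
  intros Hn. revert d. induction k; intros d HT.
  - rewrite Ek_0. simpl. field. lra.
  - rewrite Ek_S.
    rewrite (sumR_ext _ _ (fun p => INR (d p + 1) / TW n d *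
       ((INR k * TW n d / ((TW n d + INR k - 1) * (TW n d + INR k))) * Zc n (inc p d)
        + (TW n d * (TW n d - 1) / ((TW n d + INR k - 1) * (TW n d + INR k))) * Oc n (inc p d)))).
    + rewrite step_lin by auto. rewrite S_INR.
      pose proof (pos_INR k). field. lra.
    + intros p Hp. apply in_seq in Hp. rewrite IHk; rewrite TW_inc by lia; [|lra].
      pose proof (pos_INR k). field. lra.
Qed.

Lemma step_prob_nz d n c : step_prob d n c <> 0 -> forall p, In p c -> (p < n)%nat.
Proof.
  revert d. induction c as [|q c IH]; intros d H p Hp; [destruct Hp|].
  simpl in H. destruct (Nat.ltb_spec q n) as [Hq|Hq]; [|lra].
  destruct Hp as [->|Hp]; auto.
  apply (IH (fun v => if Nat.eqb v q then S (d v) else d v)); auto.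
  intros E. apply H. rewrite E. ring.
Qed.

Lemma hist_inv m hr : hist_prob_rev m hr <> 0 ->
  forall c, In c hr -> length c = m /\ forall p, In p c -> (p < length hr)%nat.
Proof.
  induction hr as [|c0 hr IH]; intros H c Hc; [destruct Hc|].
  simpl in H. destruct (Nat.eqb_spec (length c0) m) as [Hl|Hl]; [|exfalso; apply H; ring].
  assert (H1 : hist_prob_rev m hr <> 0) by (intros E; apply H; rewrite E; ring).
  assert (H2 : step_prob (outdeg hr) (S (length hr)) c0 <> 0) by (intros E; apply H; rewrite E; ring).
  destruct Hc as [<-|Hc].
  - split; auto. intros p Hp. simpl. apply (step_prob_nz _ _ _ H2 p Hp).
  - destruct (IH H1 c Hc) as [A B]. split; auto. intros p Hp. simpl. specialize (B p Hp). lia.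
Qed.

Lemma all_steps_in k n c : In c (all_steps k n) -> forall p, In p c -> (p < n)%nat.
Proof.
  revert c. induction k; intros c Hc p Hp.
  - simpl in Hc. destruct Hc as [<-|[]]. destruct Hp.
  - simpl in Hc. apply in_flat_map in Hc. destruct Hc as [q [Hq Hc]].
    apply in_map_iff in Hc. destruct Hc as [c' [<- Hc']].
    destruct Hp as [->|Hp]. apply in_seq in Hq; lia. eapply IHk; eauto.
Qed.

Lemma outdeg_app h c v : outdeg (h ++ [c]) v = (outdeg h v + count_step v c)%nat.
Proof. induction h; simpl; [lia|]. unfold outdeg in *. simpl. rewrite IHh. lia. Qed.

Lemma count_step_0 v c : (forall p, In p c -> (p < v)%nat) -> count_step v c = 0%nat.
Proof.
  intros H. unfold count_step. apply count_occ_not_In. intros Hi. specialize (H v Hi). lia.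
Qed.

Lemma outdeg_zero h v : (forall c, In c h -> forall p, In p c -> (p < v)%nat) -> outdeg h v = 0%nat.
Proof.
  induction h; intros H; [reflexivity|]. unfold outdeg in *. simpl.
  rewrite IHh by (intros; eapply H; simpl; eauto). rewrite count_step_0 by (apply H; simpl; auto). lia.
Qed.

Lemma count_sum n c : (forall p, In p c -> (p < n)%nat) ->
  sumR (seq 0 n) (fun v => INR (count_step v c)) = INR (length c).
Proof.
  induction c as [|q c IH]; intros H.
  - simpl. unfold count_step. simpl. apply sumR_zero.
  - rewrite (sumR_ext _ _ (fun v => INR (count_step v c) + if Nat.eqb v q then 1 else 0)).
    + rewrite sumR_plus, sumR_delta, IH by (first [apply H; simpl; auto | intros p0 Hp0; apply H; simpl; auto]).
      simpl length. rewrite S_INR. ring.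
    + intros v _. unfold count_step. simpl. destruct (Nat.eq_dec q v); destruct (Nat.eqb_spec v q); try lia.
      rewrite S_INR; ring. ring.
Qed.

Lemma TW_hist m n h : (forall c, In c h -> length c = m /\ forall p, In p c -> (p < n)%nat) ->
  TW n (outdeg h) = INR n + INR m * INR (length h).
Proof.
  induction h as [|c h IH]; intros H.
  - unfold TW. unfold outdeg. simpl.
    rewrite (sumR_ext _ _ (fun _ => 1 * 1)) by (intros; simpl; ring).
    rewrite sumR_scal. clear. induction n. simpl. unfold sumR. simpl. ring.
    rewrite sumR_seqS, S_INR. lra.
  - unfold TW in *.
    rewrite (sumR_ext _ _ (fun v => INR (count_step v c) + INR (outdeg h v + 1))).
    + rewrite sumR_plus, IH, count_sum; [| intros p0 Hp0; apply (H c); simpl; auto | intros; apply H; simpl; auto].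
      destruct (H c (or_introl eq_refl)) as [-> _]. simpl length. rewrite S_INR. ring.
    + intros v _. unfold outdeg. simpl. rewrite <- plus_INR. f_equal. lia.
Qed.

Lemma W_of_Zc h : W_of h = Zc (S (length h)) (outdeg h).
Proof. unfold W_of. rewrite length_filter_sumR. reflexivity. Qed.

Lemma B_of_Oc h : B_of h = 2 * Oc (S (length h)) (outdeg h).
Proof. unfold B_of. rewrite length_filter_sumR. reflexivity. Qed.

Lemma cond_exp_lin m (h : history) a b c0 :
  (forall c, In c h -> forall p, In p c -> (p < length h)%nat) ->
  cond_exp m h (fun h' => a * W_of h' + b * B_of h' + c0) =
  a * (Ek m (S (length h)) (outdeg h) (Zc (S (length h))) + 1)
  + b * (2 * Ek m (S (length h)) (outdeg h) (Oc (S (length h)))) + c0.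
Proof.
  intros Hinv. set (n := S (length h)). set (d := outdeg h).
  assert (Hdn : d n = 0%nat).
  { unfold d. apply outdeg_zero. intros c Hc p Hp. specialize (Hinv c Hc p Hp). unfold n. lia. }
  transitivity (Ek m n d (fun d' => a * Zc n d' + (2 * b) * Oc n d' + (a + c0))).
  - unfold cond_exp, Ek. f_equal. apply map_ext_in. intros c Hc. f_equal.
    assert (Hc' := all_steps_in _ _ _ Hc).
    rewrite W_of_Zc, B_of_Oc.
    set (h' := h ++ [c]).
    assert (Hu : outdeg h' = upd c d).
    { apply functional_extensionality. intros v. unfold h'. apply outdeg_app. }
    assert (Hl : length h' = n) by (unfold h'; rewrite length_app; simpl; unfold n; lia).
    rewrite Hu, Hl.
    unfold Zc, Oc. rewrite !sumR_seqS.
    assert (Hun : upd c d n = 0%nat).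
    { unfold upd. rewrite Hdn, count_step_0; auto. }
    rewrite Hun. unfold ind0, ind1. simpl. ring.
  - rewrite Ek_lin, Ek_one by (unfold n; lia). ring.
Qed.


Lemma Gamma_shift a y : 0 < y -> a = y + 1 -> Gamma a = y * Gamma y.
Proof. intros Hy ->. apply Gamma_rec; auto. Qed.

Lemma Gamma_shift2 a y : 0 < y -> a = y + 2 -> Gamma a = (y + 1) * y * Gamma y.
Proof.
  intros Hy ->. replace (y + 2) with ((y + 1) + 1) by ring.
  rewrite Gamma_rec by lra. rewrite Gamma_rec by lra. ring.
Qed.

Definition c1 (m n' : R) := Gamma ((m*n' + m + n') / (m + 1)) /
    (Gamma n' * Gamma ((2*m + 1) / (m + 1))).
Definition d1 (m n' : R) := - Gamma ((m*n' + 2*m + n' + 1) / (m + 1)) /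
       (Gamma n' * Gamma ((3*m + 2) / (m + 1))) + 1.

Lemma M1_eq m n h : M1 m n h = c1 (INR m) (INR n) * W_of h + d1 (INR m) (INR n).
Proof. reflexivity. Qed.

Lemma alg1 mm x : 2 <= mm -> 3 <= x ->
  let T := x + mm * (x - 1) in
  c1 mm x * (T - 1) / (T + mm - 1) = c1 mm (x - 1) /\ c1 mm x + d1 mm x = d1 mm (x - 1).
Proof.
  intros Hm Hx T. unfold T, c1, d1.
  set (u := (mm * (x - 1) + mm + (x - 1)) / (mm + 1)).
  assert (Hu : 0 < u) by (unfold u; apply Rdiv_lt_0_compat; nra).
  rewrite (Gamma_shift ((mm * x + mm + x) / (mm + 1)) u) by (auto; unfold u; field; lra).
  rewrite (Gamma_shift2 ((mm * x + 2 * mm + x + 1) / (mm + 1)) u) by (auto; unfold u; field; lra).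
  replace ((mm * (x - 1) + 2 * mm + (x - 1) + 1) / (mm + 1)) with (u + 1) by (unfold u; field; lra).
  rewrite (Gamma_rec u Hu).
  rewrite (Gamma_shift x (x - 1)) by lra.
  rewrite (Gamma_shift ((3 * mm + 2) / (mm + 1)) ((2 * mm + 1) / (mm + 1))) by (try apply Rdiv_lt_0_compat; try field; lra).
  assert (G1 : 0 < Gamma u) by (apply Gamma_pos; auto).
  assert (G2 : 0 < Gamma (x - 1)) by (apply Gamma_pos; lra).
  assert (G3 : 0 < Gamma ((2 * mm + 1) / (mm + 1))) by (apply Gamma_pos; apply Rdiv_lt_0_compat; lra).
  assert (H2 : 0 < (2 * mm + 1) / (mm + 1)) by (apply Rdiv_lt_0_compat; lra).
  unfold u in *. split; field; repeat split; nra.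
Qed.

Definition a2 (m n' : R) := (2 * Gamma ((m*n' + m + n') / (m + 1)) /
     (Gamma n' * Gamma ((2*m + 1) / (m + 1)))
   - 2 * (m*n' + n' - 1) * Gamma ((m*n' + m + n' - 1) / (m + 1)) /
     (m * Gamma n' * Gamma (2*m / (m + 1)))).
Definition b2 (m n' : R) := (m*n' + n' - 1) * Gamma ((m*n' + m + n' - 1) / (m + 1)) /
     (m * Gamma n' * Gamma (2*m / (m + 1))).
Definition e2 (m n' : R) := ((m + 1) * (2*m*n' + m + 2*n' - 1) * Gamma ((m*n' + 2*m + n') / (m + 1)) /
       (m * (3*m + 1) * Gamma n' * Gamma (2*m / (m + 1)))
     - 2 * Gamma ((m*n' + 2*m + n' + 1) / (m + 1)) /
       (Gamma n' * Gamma ((3*m + 2) / (m + 1)))).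

Lemma M2_eq m n h : M2 m n h = a2 (INR m) (INR n) * W_of h + b2 (INR m) (INR n) * B_of h + e2 (INR m) (INR n).
Proof. reflexivity. Qed.

Lemma alg2 mm x : 2 <= mm -> 3 <= x ->
  let T := x + mm * (x - 1) in
  a2 mm x * (T - 1) / (T + mm - 1) + b2 mm x * 2 * mm * (T - 1) / ((T + mm - 2) * (T + mm - 1)) = a2 mm (x - 1)
  /\ b2 mm x * (T - 1) * (T - 2) / ((T + mm - 2) * (T + mm - 1)) = b2 mm (x - 1)
  /\ a2 mm x + e2 mm x = e2 mm (x - 1).
Proof.
  intros Hm Hx T. unfold T, a2, b2, e2.
  set (u := (mm * (x - 1) + mm + (x - 1)) / (mm + 1)).
  assert (Hu : 0 < u) by (unfold u; apply Rdiv_lt_0_compat; nra).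
  set (v := (mm * (x - 1) + mm + (x - 1) - 1) / (mm + 1)).
  assert (Hv : 0 < v) by (unfold v; apply Rdiv_lt_0_compat; nra).
  rewrite (Gamma_shift ((mm * x + mm + x) / (mm + 1)) u) by (auto; unfold u; field; lra).
  rewrite (Gamma_shift2 ((mm * x + 2 * mm + x + 1) / (mm + 1)) u) by (auto; unfold u; field; lra).
  replace ((mm * (x - 1) + 2 * mm + (x - 1) + 1) / (mm + 1)) with (u + 1) by (unfold u; field; lra).
  rewrite (Gamma_rec u Hu).
  rewrite (Gamma_shift ((mm * x + mm + x - 1) / (mm + 1)) v) by (auto; unfold v; field; lra).
  rewrite (Gamma_shift2 ((mm * x + 2 * mm + x) / (mm + 1)) v) by (auto; unfold v; field; lra).
  replace ((mm * (x - 1) + 2 * mm + (x - 1)) / (mm + 1)) with (v + 1) by (unfold v; field; lra).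
  rewrite (Gamma_rec v Hv).
  rewrite (Gamma_shift x (x - 1)) by lra.
  rewrite (Gamma_shift ((3 * mm + 2) / (mm + 1)) ((2 * mm + 1) / (mm + 1))) by (try apply Rdiv_lt_0_compat; try field; lra).
  assert (G1 : 0 < Gamma u) by (apply Gamma_pos; auto).
  assert (G1' : 0 < Gamma v) by (apply Gamma_pos; auto).
  assert (G2 : 0 < Gamma (x - 1)) by (apply Gamma_pos; lra).
  assert (G3 : 0 < Gamma ((2 * mm + 1) / (mm + 1))) by (apply Gamma_pos; apply Rdiv_lt_0_compat; lra).
  assert (G4 : 0 < Gamma (2 * mm / (mm + 1))) by (apply Gamma_pos; apply Rdiv_lt_0_compat; lra).
  assert (H2 : 0 < (2 * mm + 1) / (mm + 1)) by (apply Rdiv_lt_0_compat; lra).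
  unfold u, v in *. split; [|split]; field; repeat split; nra.
Qed.

Theorem lemma1 (m n : nat) (h : list (list nat)) :
  (2 <= m)%nat -> (3 <= n)%nat ->
  length h = (n - 1)%nat -> 0 < hist_prob m h ->
  cond_exp m h (M1 m n) = M1 m (n - 1) h /\
  cond_exp m h (M2 m n) = M2 m (n - 1) h.
Proof.
  intros Hm Hn Hlen Hp.
  assert (Hinv : forall c, In c h -> length c = m /\ forall p, In p c -> (p < length h)%nat).
  { intros c Hc. unfold hist_prob in Hp.
    pose proof (hist_inv m (rev h) ltac:(apply Rgt_not_eq; exact Hp) c (proj1 (in_rev h c) Hc)) as H.
    rewrite length_rev in H. exact H. }
  assert (HN : S (length h) = n) by lia.
  assert (HT : TW n (outdeg h) = INR n + INR m * (INR n - 1)).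
  { rewrite TW_hist with (m := m).
    - rewrite Hlen, minus_INR by lia. reflexivity.
    - intros c Hc. destruct (Hinv c Hc) as [A B]. split; auto. intros p Hp'. specialize (B p Hp'). lia. }
  assert (Hmm : 2 <= INR m) by (replace 2 with (INR 2) by (simpl; ring); apply le_INR; lia).
  assert (Hx : 3 <= INR n) by (replace 3 with (INR 3) by (simpl; ring); apply le_INR; lia).
  assert (HT3 : 3 <= TW n (outdeg h)) by (rewrite HT; nra).
  assert (Hn0 : (0 < n)%nat) by lia.
  assert (HN2 : S (@length step h) = n) by exact HN.
  assert (HW : W_of h = Zc n (outdeg h)) by (rewrite W_of_Zc, HN2; reflexivity).
  assert (HB : B_of h = 2 * Oc n (outdeg h)) by (rewrite B_of_Oc, HN2; reflexivity).
  assert (Hinv' : forall c, In c h -> forall p, In p c -> (p < length h)%nat)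
    by (intros c Hc; apply Hinv; auto).
  split.
  - replace (M1 m n) with (fun h' => c1 (INR m) (INR n) * W_of h' + 0 * B_of h' + d1 (INR m) (INR n))
      by (apply functional_extensionality; intros; rewrite M1_eq; ring).
    rewrite cond_exp_lin by auto. rewrite HN2, Ek_Z by auto. rewrite M1_eq.
    rewrite minus_INR by lia. change (INR 1) with 1.
    rewrite HW, HT.
    destruct (alg1 (INR m) (INR n) Hmm Hx) as [E1 E2]. simpl in E1.
    rewrite <- E1, <- E2. field. nra.
  - replace (M2 m n) with (fun h' => a2 (INR m) (INR n) * W_of h' + b2 (INR m) (INR n) * B_of h' + e2 (INR m) (INR n))
      by (apply functional_extensionality; intros; rewrite M2_eq; ring).
    rewrite cond_exp_lin by auto. rewrite HN2, Ek_Z, Ek_O by auto. rewrite M2_eq.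
    rewrite minus_INR by lia. change (INR 1) with 1.
    rewrite HW, HB, HT.
    destruct (alg2 (INR m) (INR n) Hmm Hx) as [E1 [E2 E3]]. simpl in E1, E2.
    rewrite <- E1, <- E2, <- E3.
    pose proof (Rmult_le_pos (INR m) (INR n - 1) ltac:(lra) ltac:(lra)).
    field. split; lra.
Qed.
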